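(* Let $X$ be a Tychonoff space. The following are equivalent: (1) $(C(X),\tau_\Gamma)$ is first countable; (2) $(C(X),\tau_\Gamma)$ is metrizable; (3) $(C(X),\tau_\Gamma)$ is completely metrizable; (4) $(C(X),\tau_\Gamma)$ is Čech-complete; (5) $X$ is countably compact; (6) $(C(X),\tau_\Gamma)$ is Fréchet (Fréchet–Urysohn); (7) $(C(X),\tau_\Gamma)$ has countable tightness.
   Context: $C(X)$ is the set of continuous real-valued functions on $X$, each identified with its graph in $X\times\mathbb{R}$. The graph topology $\tau_\Gamma$ on $C(X)$ has base $\{F_G: G\text{ open in }X\times\mathbb{R}\}$ where $F_G=\{f\in C(X): f\subset G\}$. *)

(* Defs.v *)
From Stdlib Require Import Reals List Classical.
Open Scope R_scope.

Definition is_topology {T : Type} (op : (T -> Prop) -> Prop) : Prop :=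
  op (fun _ => True) /\
  (forall U V, op U -> op V -> op (fun x => U x /\ V x)) /\
  (forall F : (T -> Prop) -> Prop, (forall U, F U -> op U) ->
      op (fun x => exists U, F U /\ U x)).

Definition R_open (U : R -> Prop) : Prop :=
  forall r, U r -> exists eps, 0 < eps /\ forall s, Rabs (s - r) < eps -> U s.

Definition continuous {T S : Type} (opT : (T -> Prop) -> Prop)
  (opS : (S -> Prop) -> Prop) (f : T -> S) : Prop :=
  forall V, opS V -> opT (fun x => V (f x)).

Definition closure {T : Type} (op : (T -> Prop) -> Prop) (A : T -> Prop) (x : T) : Prop :=
  forall U, op U -> U x -> exists y, U y /\ A y.

Definition is_closed {T : Type} (op : (T -> Prop) -> Prop) (A : T -> Prop) : Prop :=
  op (fun x => ~ A x).

Definition seq_converges {T : Type} (op : (T -> Prop) -> Prop) (s : nat -> T) (x : T) : Prop :=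
  forall U, op U -> U x -> exists N, forall n, (N <= n)%nat -> U (s n).

Definition countable_set {T : Type} (B : T -> Prop) : Prop :=
  exists g : T -> nat, forall y z, B y -> B z -> g y = g z -> y = z.

Definition T1_space {T : Type} (op : (T -> Prop) -> Prop) : Prop :=
  forall x y, x <> y -> exists U, op U /\ U x /\ ~ U y.

Definition hausdorff {T : Type} (op : (T -> Prop) -> Prop) : Prop :=
  forall x y, x <> y -> exists U V, op U /\ op V /\ U x /\ V y /\
     (forall z, ~ (U z /\ V z)).

Definition tychonoff {T : Type} (op : (T -> Prop) -> Prop) : Prop :=
  T1_space op /\
  forall (A : T -> Prop) (x : T), is_closed op A -> ~ A x ->
    exists f : T -> R, continuous op R_open f /\
      (forall y, 0 <= f y <= 1) /\ f x = 0 /\ (forall y, A y -> f y = 1).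

Definition compact {T : Type} (op : (T -> Prop) -> Prop) : Prop :=
  forall F : (T -> Prop) -> Prop, (forall U, F U -> op U) ->
    (forall x, exists U, F U /\ U x) ->
    exists l : list (T -> Prop), (forall U, In U l -> F U) /\
      (forall x, exists U, In U l /\ U x).

Definition countably_compact {T : Type} (op : (T -> Prop) -> Prop) : Prop :=
  forall U : nat -> (T -> Prop), (forall n, op (U n)) ->
    (forall x, exists n, U n x) ->
    exists l : list nat, forall x, exists n, In n l /\ U n x.

Definition first_countable {T : Type} (op : (T -> Prop) -> Prop) : Prop :=
  forall x, exists B : nat -> (T -> Prop),
    (forall n, op (B n) /\ B n x) /\
    (forall U, op U -> U x -> exists n, forall y, B n y -> U y).

Definition frechet_urysohn {T : Type} (op : (T -> Prop) -> Prop) : Prop :=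
  forall (A : T -> Prop) x, closure op A x ->
    exists s : nat -> T, (forall n, A (s n)) /\ seq_converges op s x.

Definition countable_tightness {T : Type} (op : (T -> Prop) -> Prop) : Prop :=
  forall (A : T -> Prop) x, closure op A x ->
    exists B : T -> Prop, (forall y, B y -> A y) /\ countable_set B /\ closure op B x.

Definition is_metric {T : Type} (d : T -> T -> R) : Prop :=
  (forall x y, 0 <= d x y) /\ (forall x y, d x y = 0 <-> x = y) /\
  (forall x y, d x y = d y x) /\ (forall x y z, d x z <= d x y + d y z).

Definition metric_open {T : Type} (d : T -> T -> R) (U : T -> Prop) : Prop :=
  forall x, U x -> exists eps, 0 < eps /\ forall y, d x y < eps -> U y.

Definition metric_complete {T : Type} (d : T -> T -> R) : Prop :=
  forall s : nat -> T,
    (forall eps, 0 < eps -> exists N, forall m n, (N <= m)%nat -> (N <= n)%nat ->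
        d (s m) (s n) < eps) ->
    exists x, forall eps, 0 < eps -> exists N, forall n, (N <= n)%nat -> d (s n) x < eps.

Definition metrizable {T : Type} (op : (T -> Prop) -> Prop) : Prop :=
  exists d : T -> T -> R, is_metric d /\ forall U, op U <-> metric_open d U.

Definition completely_metrizable {T : Type} (op : (T -> Prop) -> Prop) : Prop :=
  exists d : T -> T -> R, is_metric d /\ metric_complete d /\
    forall U, op U <-> metric_open d U.

(* Cech-completeness: X is a G_delta in some Hausdorff compactification
   (K, e) of X (e a homeomorphic embedding with dense image). *)
Definition cech_complete {T : Type} (op : (T -> Prop) -> Prop) : Prop :=
  exists (K : Type) (opK : (K -> Prop) -> Prop) (e : T -> K),
    is_topology opK /\ hausdorff opK /\ compact opK /\
    (forall x y, e x = e y -> x = y) /\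
    continuous op opK e /\
    (forall U, op U -> exists V, opK V /\ forall x, U x <-> V (e x)) /\
    (forall k, closure opK (fun k' => exists x, e x = k') k) /\
    (exists V : nat -> (K -> Prop), (forall n, opK (V n)) /\
       forall k, (forall n, V n k) <-> exists x, e x = k).

Definition prod_open {T : Type} (op : (T -> Prop) -> Prop) (G : T * R -> Prop) : Prop :=
  forall x r, G (x, r) -> exists V eps, op V /\ V x /\ 0 < eps /\
    forall y s, V y -> Rabs (s - r) < eps -> G (y, s).

Definition CX {T : Type} (op : (T -> Prop) -> Prop) : Type :=
  { f : T -> R | continuous op R_open f }.

(* f subset G, f identified with its graph in X x R. *)
Definition graph_in {T : Type} (f : T -> R) (G : T * R -> Prop) : Prop :=
  forall x, G (x, f x).

Definition F_G {T : Type} (op : (T -> Prop) -> Prop) (G : T * R -> Prop) (f : CX op) : Prop :=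
  graph_in (proj1_sig f) G.

(* The graph topology tau_Gamma: the topology generated by the base
   { F_G : G open in X x R } (open sets = unions of basic open sets). *)
Definition graph_open {T : Type} (op : (T -> Prop) -> Prop) (W : CX op -> Prop) : Prop :=
  forall f, W f -> exists G, prod_open op G /\ F_G op G f /\
    (forall g, F_G op G g -> W g).

(* Main.v *)
Require Import Defs.
From Stdlib Require Import Reals List Classical.
From Stdlib Require Import Lra Lia Arith.
From Stdlib Require Import FunctionalExtensionality PropExtensionality ProofIrrelevance ClassicalEpsilon.
From mathcomp Require classical_sets boolp.
Open Scope R_scope.

Lemma pred_ext {A : Type} (P Q : A -> Prop) : (forall x, P x <-> Q x) -> P = Q.
Proof. intro H. apply functional_extensionality. intro x. apply propositional_extensionality. apply H. Qed.

Lemma op_ext {A : Type} (op : (A -> Prop) -> Prop) (P Q : A -> Prop) :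
  op P -> (forall x, P x <-> Q x) -> op Q.
Proof. intros H E. rewrite <- (pred_ext P Q E). exact H. Qed.

Lemma op_local {A : Type} (op : (A -> Prop) -> Prop) (P : A -> Prop) :
  is_topology op ->
  (forall x, P x -> exists V, op V /\ V x /\ forall y, V y -> P y) -> op P.
Proof.
  intros [_ [_ Hu]] H.
  apply op_ext with (P := fun x => exists U, (op U /\ forall y, U y -> P y) /\ U x).
  - apply Hu. intros U [HU _]. exact HU.
  - intro x. split.
    + intros [U [[_ HU] Ux]]. apply HU, Ux.
    + intro Px. destruct (H x Px) as [V [HV [Vx HVP]]]. exists V. tauto.
Qed.

Lemma op_inter {A : Type} (op : (A -> Prop) -> Prop) U V :
  is_topology op -> op U -> op V -> op (fun x => U x /\ V x).
Proof. intros [_ [H _]]. apply H. Qed.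

Lemma op_True {A : Type} (op : (A -> Prop) -> Prop) :
  is_topology op -> op (fun _ => True).
Proof. intros [H _]. exact H. Qed.

Lemma op_empty {A : Type} (op : (A -> Prop) -> Prop) :
  is_topology op -> op (fun _ => False).
Proof.
  intro Ht. apply op_local; auto. intros x [].
Qed.

Lemma R_open_interval a b : R_open (fun s => a < s < b).
Proof.
  intros r Hr. exists (Rmin (r - a) (b - r)). split.
  - apply Rmin_case; lra.
  - intros s Hs. pose proof (Rmin_l (r - a) (b - r)). pose proof (Rmin_r (r - a) (b - r)).
    apply Rabs_def2 in Hs. lra.
Qed.

Lemma cont_char {A : Type} (op : (A -> Prop) -> Prop) (f : A -> R) :
  is_topology op ->
  (continuous op R_open f <->
   forall x eps, 0 < eps -> exists V, op V /\ V x /\ forall y, V y -> Rabs (f y - f x) < eps).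
Proof.
  intro Ht. split.
  - intros Hc x eps He. exists (fun y => f x - eps < f y < f x + eps). split.
    + apply (Hc (fun s => f x - eps < s < f x + eps)). apply R_open_interval.
    + split. lra. intros y Hy. apply Rabs_def1; lra.
  - intros H V HV. apply op_local; auto. intros x Vx.
    destruct (HV (f x) Vx) as [eps [He Heps]].
    destruct (H x eps He) as [W [HW [Wx HWy]]]. exists W. split; [exact HW|split; [exact Wx|]].
    intros y Wy. apply Heps. apply HWy, Wy.
Qed.

Lemma cont_const {A : Type} (op : (A -> Prop) -> Prop) c :
  is_topology op -> continuous op R_open (fun _ => c).
Proof.
  intro Ht. apply cont_char; auto. intros x eps He. exists (fun _ => True).
  split. apply op_True; auto. split; auto. intros. rewrite Rminus_diag, Rabs_R0. lra.
Qed.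

Lemma cont_plus {A : Type} (op : (A -> Prop) -> Prop) f g :
  is_topology op -> continuous op R_open f -> continuous op R_open g ->
  continuous op R_open (fun x => f x + g x).
Proof.
  intros Ht Hf Hg. rewrite cont_char in Hf, Hg |- *; auto. intros x eps He.
  destruct (Hf x (eps/2)) as [V [HV [Vx HVf]]]. lra.
  destruct (Hg x (eps/2)) as [W [HW [Wx HWg]]]. lra.
  exists (fun y => V y /\ W y). split. apply op_inter; auto. split; auto.
  intros y [Vy Wy]. specialize (HVf y Vy). specialize (HWg y Wy).
  replace (f y + g y - (f x + g x)) with ((f y - f x) + (g y - g x)) by ring.
  pose proof (Rabs_triang (f y - f x) (g y - g x)). lra.
Qed.

Lemma cont_scal {A : Type} (op : (A -> Prop) -> Prop) c f :
  is_topology op -> continuous op R_open f -> continuous op R_open (fun x => c * f x).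
Proof.
  intros Ht Hf. rewrite cont_char in Hf |- *; auto. intros x eps He.
  destruct (Hf x (eps / (Rabs c + 1))) as [V [HV [Vx HVf]]].
  { apply Rdiv_lt_0_compat; auto. pose proof (Rabs_pos c); lra. }
  exists V. split; auto. split; auto. intros y Vy. specialize (HVf y Vy).
  replace (c * f y - c * f x) with (c * (f y - f x)) by ring. rewrite Rabs_mult.
  pose proof (Rabs_pos c). pose proof (Rabs_pos (f y - f x)).
  assert (Rabs c * Rabs (f y - f x) <= Rabs c * (eps / (Rabs c + 1))).
  { apply Rmult_le_compat_l; lra. }
  assert (Rabs c * (eps / (Rabs c + 1)) < eps).
  { unfold Rdiv. replace (Rabs c * (eps * / (Rabs c + 1))) with (eps * (Rabs c / (Rabs c + 1))) by (unfold Rdiv; ring).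
    assert (Rabs c / (Rabs c + 1) < 1).
    { apply (Rmult_lt_reg_r (Rabs c + 1)). lra. unfold Rdiv. rewrite Rmult_assoc, Rinv_l; lra. }
    nra. }
  lra.
Qed.

Lemma cont_minus_const {A : Type} (op : (A -> Prop) -> Prop) f :
  is_topology op -> continuous op R_open f -> continuous op R_open (fun x => 1 - f x).
Proof.
  intros Ht Hf.
  assert (continuous op R_open (fun x => 1 + (-1) * f x)).
  { apply cont_plus; auto. apply cont_const; auto. apply cont_scal; auto. }
  replace (fun x => 1 - f x) with (fun x => 1 + (-1) * f x). auto.
  apply functional_extensionality. intro; ring.
Qed.


Definition mclosed {M : Type} (d : M -> M -> R) (C : M -> Prop) : Prop :=
  forall x, ~ C x -> exists r, 0 < r /\ forall y, d x y < r -> ~ C y.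

Definition FIP {M : Type} (F : (M -> Prop) -> Prop) : Prop :=
  forall l, (forall C, In C l -> F C) -> exists x, forall C, In C l -> C x.

Definition cfam {M : Type} (d : M -> M -> R) (F : (M -> Prop) -> Prop) : Prop :=
  forall C, F C -> mclosed d C.

Definition ultra {M : Type} (d : M -> M -> R) (p : (M -> Prop) -> Prop) : Prop :=
  cfam d p /\ FIP p /\
  forall q, cfam d q -> FIP q -> (forall C, p C -> q C) -> forall C, q C -> p C.

Lemma list_reduce {M : Type} (p : (M -> Prop) -> Prop) (D : M -> Prop) l :
  (forall C, In C l -> p C \/ C = D) ->
  exists l', (forall C, In C l' -> p C) /\
    forall x, D x -> (forall C, In C l' -> C x) -> forall C, In C l -> C x.
Proof.
  induction l as [|C l IH]; intro H.
  - exists nil. split. intros C []. intros x _ _ C [].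
  - destruct IH as [l' [H1 H2]]. { intros C' HC'. apply H. right. exact HC'. }
    destruct (H C (or_introl eq_refl)) as [HC|HC].
    + exists (C :: l'). split.
      * intros C' [<-|HC']; auto.
      * intros x Dx Hx C' [<-|HC']. apply Hx; left; auto. apply (H2 x Dx); auto.
        intros C'' HC''. apply Hx. right; auto.
    + exists l'. split; auto. intros x Dx Hx C' [<-|HC']. subst; auto. apply (H2 x Dx); auto.
Qed.

Lemma ultra_add {M : Type} (d : M -> M -> R) p D :
  ultra d p -> mclosed d D ->
  (forall l, (forall C, In C l -> p C) -> exists x, D x /\ forall C, In C l -> C x) -> p D.
Proof.
  intros [Hc [Hf Hm]] HD H.
  apply (Hm (fun C => p C \/ C = D)).
  - intros C [HC|HC]. apply Hc; auto. subst; auto.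
  - intros l Hl. destruct (list_reduce p D l Hl) as [l' [H1 H2]].
    destruct (H l' H1) as [x [Dx Hx]]. exists x. apply H2; auto.
  - intros C HC; left; auto.
  - right; auto.
Qed.

Definition linter {M : Type} (l : list (M -> Prop)) : M -> Prop :=
  fun x => forall C, In C l -> C x.

Lemma mclosed_linter {M : Type} (d : M -> M -> R) l :
  (forall C, In C l -> mclosed d C) -> mclosed d (linter l).
Proof.
  unfold mclosed, linter; induction l as [|C l IH]; intros H x Hx.
  - exfalso. apply Hx. intros C [].
  - destruct (classic (C x)) as [Cx|Cx].
    + assert (Hnl : ~ linter l x). { intro Hl. apply Hx. intros C' [<-|HC']; [exact Cx | apply Hl; exact HC']. }
      destruct (IH (fun C' HC' => H C' (or_intror HC')) x Hnl) as [r [Hr Hy]].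
      exists r. split; auto. intros y Hdy Hly. apply (Hy y Hdy). intros C' HC'. apply Hly. right; auto.
    + destruct (H C (or_introl eq_refl) x Cx) as [r [Hr Hy]].
      exists r. split; auto. intros y Hdy Hly. apply (Hy y Hdy). apply Hly. left; auto.
Qed.

Lemma ultra_linter {M : Type} (d : M -> M -> R) p l :
  ultra d p -> (forall C, In C l -> p C) -> p (linter l).
Proof.
  intros Hu Hl. apply (ultra_add d); auto.
  - apply mclosed_linter. intros C HC. apply (proj1 Hu). auto.
  - intros l' Hl'. destruct (proj1 (proj2 Hu) (l ++ l')) as [x Hx].
    { intros C HC. apply in_app_or in HC. destruct HC; auto. }
    exists x. split.
    + intros C HC. apply Hx. apply in_or_app. auto.
    + intros C HC. apply Hx. apply in_or_app. auto.
Qed.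

Lemma ultra_inter {M : Type} (d : M -> M -> R) p C D :
  ultra d p -> p C -> p D -> p (fun x => C x /\ D x).
Proof.
  intros Hu HC HD. pose proof (ultra_linter d p (C :: D :: nil) Hu) as H.
  assert (E : linter (C :: D :: nil) = (fun x => C x /\ D x)).
  { apply pred_ext. intro x. unfold linter. simpl. split.
    - intro H'. split; apply H'; auto.
    - intros [Cx Dx] C' [<-|[<-|[]]]; auto. }
  rewrite <- E. apply H. intros C' [<-|[<-|[]]]; auto.
Qed.

Lemma ultra_nonempty {M : Type} (d : M -> M -> R) p C :
  ultra d p -> p C -> exists x, C x.
Proof.
  intros [_ [Hf _]] HC. destruct (Hf (C :: nil)) as [x Hx].
  intros C' [<-|[]]; auto. exists x. apply Hx. left; auto.
Qed.

Lemma asb (P : Prop) : is_true (boolp.asbool P) <-> P.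
Proof. destruct (boolp.asboolP P); split; intros; auto; try discriminate; try contradiction. Qed.
Lemma asb1 (P : Prop) : is_true (boolp.asbool P) -> P.
Proof. apply asb. Qed.
Lemma asb2 (P : Prop) : P -> is_true (boolp.asbool P).
Proof. apply asb. Qed.

Lemma ultra_extend {M : Type} (d : M -> M -> R) S :
  cfam d S -> FIP S -> exists p, ultra d p /\ forall C, S C -> p C.
Proof.
  intros HSc HSf.
  set (Tz := {F : (M -> Prop) -> Prop | cfam d F /\ FIP F /\ forall C, S C -> F C}).
  set (t0 := exist (fun F => cfam d F /\ FIP F /\ forall C, S C -> F C) S
                   (conj HSc (conj HSf (fun C H => H))) : Tz).
  set (Rz := fun a b : Tz => boolp.asbool (forall C, proj1_sig a C -> proj1_sig b C)).
  destruct (@classical_sets.ZL_preorder Tz t0 Rz) as [t Ht].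
  - intro t. unfold Rz. apply asb2. auto.
  - intros r s t Hrs Hst. unfold Rz in *. apply asb2. apply asb1 in Hrs. apply asb1 in Hst. auto.
  - intros A HA.
    set (ub := fun C => S C \/ exists F, A F /\ proj1_sig F C).
    assert (Hub : forall l, (forall C, In C l -> ub C) ->
       exists G : Tz, (G = t0 \/ A G) /\ forall C, In C l -> proj1_sig G C).
    { induction l as [|C l IH]; intro Hl.
      - exists t0. split; auto. intros C [].
      - destruct IH as [G [HG1 HG2]]. { intros C' H'; apply Hl; right; auto. }
        destruct (Hl C (or_introl eq_refl)) as [HC|[F [AF FC]]].
        + exists G. split; auto. intros C' [<-|H'].
          * destruct (proj2_sig G) as [_ [_ HS]]. apply HS, HC.
          * apply HG2, H'.
        + destruct HG1 as [HG1|HG1].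
          * exists F. split; auto. intros C' [<-|H']; auto.
            destruct (proj2_sig F) as [_ [_ HS]]. apply HS. subst G. apply HG2, H'.
          * destruct (HA F G AF HG1) as [HFG|HGF]; unfold Rz in *; [apply asb1 in HFG | apply asb1 in HGF].
            -- exists G. split; auto. intros C' [<-|H']; auto.
            -- exists F. split; auto. intros C' [<-|H']; auto. }
    assert (Hc : cfam d ub).
    { intros C [HC|[F [_ FC]]]. apply HSc, HC. destruct (proj2_sig F) as [H _]. apply H, FC. }
    assert (Hf : FIP ub).
    { intros l Hl. destruct (Hub l Hl) as [G [_ HG]]. destruct (proj2_sig G) as [_ [HGf _]].
      apply HGf. exact HG. }
    exists (exist _ ub (conj Hc (conj Hf (fun C H => or_introl H)))).
    intros s As. unfold Rz. apply asb2. intros C HC. right. exists s. auto.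
  - exists (proj1_sig t). destruct (proj2_sig t) as [Htc [Htf HtS]]. split; [|exact HtS].
    split; [exact Htc|]. split; [exact Htf|].
    intros q Hqc Hqf Htq.
    assert (HqS : forall C, S C -> q C) by auto.
    set (tq := exist (fun F => cfam d F /\ FIP F /\ forall C, S C -> F C) q
                   (conj Hqc (conj Hqf HqS)) : Tz).
    assert (H1 : is_true (Rz t tq)) by (unfold Rz; apply asb2; exact Htq).
    pose proof (Ht tq H1) as H2. unfold Rz in H2. apply asb1 in H2. exact H2.
Qed.

Lemma arch_inv eps : 0 < eps -> exists N, forall n, (N <= n)%nat -> / (INR n + 1) < eps.
Proof.
  intro He. destruct (archimed_cor1 eps He) as [N [HN HN0]]. exists N. intros n Hn.
  apply le_INR in Hn. assert (0 < INR N) by (apply lt_0_INR; lia).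
  apply Rle_lt_trans with (/ INR N); auto. apply Rlt_le. apply Rinv_lt_contravar; nra.
Qed.

Lemma mclosed_single {M : Type} (d : M -> M -> R) x :
  is_metric d -> mclosed d (fun y => y = x).
Proof.
  intros [H0 [H1 [Hs Ht]]] y Hy. exists (d y x). split.
  - destruct (Rle_lt_or_eq_dec 0 (d y x) (H0 y x)) as [H|H]; auto.
    exfalso. apply Hy. apply H1. auto.
  - intros w Hw Hwx. subst. lra.
Qed.

Lemma mclosed_compl {M : Type} (d : M -> M -> R) U :
  metric_open d U -> mclosed d (fun x => ~ U x).
Proof.
  intros HU x Hx. apply NNPP in Hx. destruct (HU x Hx) as [r [Hr Hy]].
  exists r. split; [exact Hr|]. intros y Hd Hn. apply Hn. apply Hy. auto.
Qed.

Lemma mclosed_True {M : Type} (d : M -> M -> R) : mclosed d (fun _ => True).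
Proof. intros x H. exfalso. apply H. auto. Qed.

Definition prin {M : Type} (d : M -> M -> R) (x : M) : (M -> Prop) -> Prop :=
  fun C => mclosed d C /\ C x.

Lemma prin_ultra {M : Type} (d : M -> M -> R) x : is_metric d -> ultra d (prin d x).
Proof.
  intro Hm. split; [|split].
  - intros C [HC _]. exact HC.
  - intros l Hl. exists x. intros C HC. apply Hl, HC.
  - intros q Hqc Hqf Hpq C HC. split. apply Hqc, HC.
    destruct (Hqf (C :: (fun y => y = x) :: nil)) as [w Hw].
    + intros C' [<-|[<-|[]]]; auto. apply Hpq. split. apply mclosed_single; auto. auto.
    + assert (w = x) by (apply Hw; right; left; auto). subst. apply Hw. left; auto.
Qed.

Lemma not_in_ultra {M : Type} (d : M -> M -> R) p C :
  ultra d p -> mclosed d C -> ~ p C -> exists D, p D /\ forall x, ~ (C x /\ D x).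
Proof.
  intros Hu HC HnC. apply NNPP. intro Hn. apply HnC. apply (ultra_add d); auto.
  intros l Hl. pose proof (ultra_linter d p l Hu Hl) as HL.
  apply NNPP. intro Hn2. apply Hn. exists (linter l). split; auto.
  intros x [Cx Lx]. apply Hn2. exists x. split; auto.
Qed.

Lemma metric_normal {M : Type} (d : M -> M -> R) C D :
  is_metric d -> mclosed d C -> mclosed d D -> (forall x, ~ (C x /\ D x)) ->
  exists U V, metric_open d U /\ metric_open d V /\ (forall x, C x -> U x) /\
    (forall x, D x -> V x) /\ forall x, ~ (U x /\ V x).
Proof.
  intros [H0 [H1 [Hs Ht]]] HC HD Hdis.
  set (U := fun x => exists c r, C c /\ 0 < r /\ (forall y, d c y < 2*r -> ~ D y) /\ d c x < r).
  set (V := fun x => exists c r, D c /\ 0 < r /\ (forall y, d c y < 2*r -> ~ C y) /\ d c x < r).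
  assert (Hd00 : forall x, d x x = 0) by (intro; apply H1; auto).
  exists U, V. split; [|split; [|split; [|split]]].
  - intros x [c [r [Cc [Hr [Hb Hx]]]]]. exists (r - d c x). split. lra.
    intros y Hy. exists c, r. repeat split; auto. pose proof (Ht c x y). lra.
  - intros x [c [r [Cc [Hr [Hb Hx]]]]]. exists (r - d c x). split. lra.
    intros y Hy. exists c, r. repeat split; auto. pose proof (Ht c x y). lra.
  - intros c Cc. assert (~ D c) by (intro; apply (Hdis c); auto).
    destruct (HD c H) as [r0 [Hr0 Hb]]. exists c, (r0/2). repeat split; auto. lra.
    intros y Hy. apply Hb. lra. rewrite Hd00. lra.
  - intros c Dc. assert (~ C c) by (intro; apply (Hdis c); auto).
    destruct (HC c H) as [r0 [Hr0 Hb]]. exists c, (r0/2). repeat split; auto. lra.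
    intros y Hy. apply Hb. lra. rewrite Hd00. lra.
  - intros x [[c [r [Cc [Hr [Hb Hx]]]]] [e [s [De [Hs' [Hb' Hx']]]]]].
    destruct (Rle_or_lt s r).
    + apply (Hb e); auto. pose proof (Ht c x e). rewrite (Hs x e) in *. lra.
    + apply (Hb' c); auto. pose proof (Ht e x c). rewrite (Hs x c) in *. lra.
Qed.

Definition WK {M : Type} (d : M -> M -> R) := {p : (M -> Prop) -> Prop | ultra d p}.

Definition Obas {M : Type} (d : M -> M -> R) (U : M -> Prop) (k : WK d) : Prop :=
  exists C, proj1_sig k C /\ forall y, C y -> U y.

Definition opK {M : Type} (d : M -> M -> R) (W : WK d -> Prop) : Prop :=
  forall k, W k -> exists U, metric_open d U /\ Obas d U k /\ forall k', Obas d U k' -> W k'.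

Lemma WK_ext {M : Type} (d : M -> M -> R) (k1 k2 : WK d) :
  (forall C, proj1_sig k1 C <-> proj1_sig k2 C) -> k1 = k2.
Proof.
  destruct k1 as [p1 H1], k2 as [p2 H2]. simpl. intro H.
  assert (p1 = p2) by (apply pred_ext; auto). subst. f_equal. apply proof_irrelevance.
Qed.

Lemma Obas_open {M : Type} (d : M -> M -> R) U : metric_open d U -> opK d (Obas d U).
Proof. intros HU k Hk. exists U. auto. Qed.

Lemma metric_open_inter {M : Type} (d : M -> M -> R) U V :
  metric_open d U -> metric_open d V -> metric_open d (fun x => U x /\ V x).
Proof.
  intros HU HV x [Ux Vx]. destruct (HU x Ux) as [r [Hr HrU]]. destruct (HV x Vx) as [s [Hs HsV]].
  exists (Rmin r s). split. apply Rmin_case; auto. intros y Hy. split.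
  apply HrU. pose proof (Rmin_l r s). lra. apply HsV. pose proof (Rmin_r r s). lra.
Qed.

Lemma ultra_True {M : Type} (d : M -> M -> R) p : ultra d p -> p (fun _ => True).
Proof.
  intro Hu. apply (ultra_add d); auto. apply mclosed_True.
  intros l Hl. destruct (proj1 (proj2 Hu) l Hl) as [x Hx]. exists x. auto.
Qed.

Lemma opK_top {M : Type} (d : M -> M -> R) : is_topology (opK d).
Proof.
  split; [|split].
  - intros k _. exists (fun _ => True). split. intros x _. exists 1. split. lra. auto.
    split; auto. exists (fun _ => True). split; auto. apply (ultra_True d). apply (proj2_sig k).
  - intros W1 W2 H1 H2 k [W1k W2k].
    destruct (H1 k W1k) as [U1 [HU1 [[C1 [C1k C1U]] HW1]]].
    destruct (H2 k W2k) as [U2 [HU2 [[C2 [C2k C2U]] HW2]]].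
    exists (fun x => U1 x /\ U2 x). split. apply metric_open_inter; auto. split.
    + exists (fun x => C1 x /\ C2 x). split. apply (ultra_inter d); auto. apply (proj2_sig k).
      intros y [? ?]; auto.
    + intros k' [C [Ck' HC]]. split.
      * apply HW1. exists C. split; auto. intros y Cy. apply HC; auto.
      * apply HW2. exists C. split; auto. intros y Cy. apply HC; auto.
  - intros F HF k [W [FW Wk]]. destruct (HF W FW k Wk) as [U [HU [HUk HUW]]].
    exists U. split; auto. split; auto. intros k' H'. exists W. split; auto.
Qed.

Lemma WK_hausdorff {M : Type} (d : M -> M -> R) : is_metric d -> hausdorff (opK d).
Proof.
  intros Hm k1 k2 Hne.
  assert (Hsep : exists C D, proj1_sig k1 C /\ proj1_sig k2 D /\ forall x, ~ (C x /\ D x)).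
  { assert (Hn : ~ forall C, proj1_sig k1 C <-> proj1_sig k2 C).
    { intro H. apply Hne. apply WK_ext; auto. }
    apply not_all_ex_not in Hn. destruct Hn as [C HC].
    destruct (classic (proj1_sig k1 C)) as [H1|H1].
    - assert (H2 : ~ proj1_sig k2 C) by tauto.
      destruct (not_in_ultra d (proj1_sig k2) C (proj2_sig k2)) as [D [HD Hdis]]; auto.
      apply (proj1 (proj2_sig k1)); auto.
      exists C, D. auto.
    - assert (H2 : proj1_sig k2 C) by tauto.
      destruct (not_in_ultra d (proj1_sig k1) C (proj2_sig k1)) as [D [HD Hdis]]; auto.
      apply (proj1 (proj2_sig k2)); auto.
      exists D, C. split; auto. split; auto. intros x [? ?]. apply (Hdis x). auto. }
  destruct Hsep as [C [D [HC [HD Hdis]]]].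
  destruct (metric_normal d C D Hm) as [U [V [HU [HV [HCU [HDV HUV]]]]]]; auto.
  apply (proj1 (proj2_sig k1)); auto. apply (proj1 (proj2_sig k2)); auto.
  exists (Obas d U), (Obas d V). split. apply Obas_open; auto. split. apply Obas_open; auto.
  split. exists C; auto. split. exists D; auto.
  intros k [[C' [HC' HC'U]] [D' [HD' HD'V]]].
  destruct (ultra_nonempty d (proj1_sig k) (fun x => C' x /\ D' x)) as [x [Cx Dx]].
  apply (proj2_sig k). apply (ultra_inter d); auto. apply (proj2_sig k).
  apply (HUV x). auto.
Qed.

Lemma WK_compact {M : Type} (d : M -> M -> R) : is_metric d -> Defs.compact (opK d).
Proof.
  intros Hm F HF Hcov.
  set (Bs := fun U => metric_open d U /\ exists W, F W /\ forall k, Obas d U k -> W k).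
  assert (Hcov' : forall k, exists U, Bs U /\ Obas d U k).
  { intro k. destruct (Hcov k) as [W [FW Wk]]. destruct (HF W FW k Wk) as [U [HU [HUk HUW]]].
    exists U. split; auto. split; auto. exists W. auto. }
  assert (Claim1 : exists lu, (forall U, In U lu -> Bs U) /\ forall x, exists U, In U lu /\ U x).
  { apply NNPP. intro Hn.
    set (S := fun C => exists U, Bs U /\ C = (fun x => ~ U x)).
    assert (HSc : cfam d S).
    { intros C [U [[HU _] ->]]. apply mclosed_compl; auto. }
    assert (HSf : FIP S).
    { intros l Hl.
      assert (Hb : exists lu, (forall U, In U lu -> Bs U) /\
                forall x, (forall U, In U lu -> ~ U x) -> forall C, In C l -> C x).
      { clear Hn. induction l as [|C l IH].
        - exists nil. split. intros U []. intros x _ C [].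
        - destruct IH as [lu [H1 H2]]. { intros C' H'. apply Hl. right. exact H'. }
          destruct (Hl C (or_introl eq_refl)) as [U [BU ->]].
          exists (U :: lu). split.
          + intros U' [<-|H']; auto.
          + intros x Hx C' [<-|H']. apply Hx. left; auto.
            apply H2; auto. intros U' HU'. apply Hx. right; auto. }
      destruct Hb as [lu [H1 H2]].
      destruct (classic (exists x, forall U, In U lu -> ~ U x)) as [[x Hx]|Hnx].
      - exists x. apply H2; auto.
      - exfalso. apply Hn. exists lu. split; auto. intro x. apply NNPP. intro Hx.
        apply Hnx. exists x. intros U HU HUx. apply Hx. exists U. auto. }
    destruct (ultra_extend d S HSc HSf) as [q [Hq HSq]].
    destruct (Hcov' (exist _ q Hq)) as [U [BU [C [HqC HCU]]]]. simpl in HqC.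
    assert (Hq' : q (fun x => ~ U x)) by (apply HSq; exists U; auto).
    destruct (ultra_nonempty d q (fun x => C x /\ ~ U x)) as [x [Cx Ux]]; auto.
    apply (ultra_inter d); auto. }
  destruct Claim1 as [lu [Hlu Hcovlu]].
  assert (Claim2 : forall k, exists U, In U lu /\ Obas d U k).
  { intro k. apply NNPP. intro Hn.
    assert (Hc : forall U, In U lu -> proj1_sig k (fun x => ~ U x)).
    { intros U HU. apply (ultra_add d). apply (proj2_sig k).
      apply mclosed_compl. apply (Hlu U HU).
      intros l Hl. pose proof (ultra_linter d _ l (proj2_sig k) Hl) as HL.
      apply NNPP. intro Hn2. apply Hn. exists U. split; auto. exists (linter l). split; auto.
      intros y Hy. apply NNPP. intro Hy'. apply Hn2. exists y. split; auto. }
    destruct (proj1 (proj2 (proj2_sig k)) (map (fun U x => ~ U x) lu)) as [x Hx].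
    { intros C HC. apply in_map_iff in HC. destruct HC as [U [<- HU]]. apply Hc; auto. }
    destruct (Hcovlu x) as [U [HU Ux]]. apply (Hx (fun x => ~ U x)); auto.
    apply in_map_iff. exists U. auto. }
  assert (Claim3 : forall lu', (forall U, In U lu' -> Bs U) -> exists lw, (forall W, In W lw -> F W) /\
     forall k, (exists U, In U lu' /\ Obas d U k) -> exists W, In W lw /\ W k).
  { induction lu' as [|U lu' IH]; intro Hl.
    - exists nil. split. intros W []. intros k [U [[] _]].
    - destruct IH as [lw [H1 H2]]. { intros U' H'. apply Hl. right. exact H'. }
      destruct (Hl U (or_introl eq_refl)) as [_ [W [FW HW]]].
      exists (W :: lw). split.
      + intros W' [<-|H']; auto.
      + intros k [U' [[<-|HU'] Hk]].
        * exists W. split. left; auto. apply HW; auto.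
        * destruct (H2 k) as [W' [HW' W'k]]. exists U'; auto. exists W'. split; auto. right; auto. }
  destruct (Claim3 lu Hlu) as [lw [H1 H2]]. exists lw. split; auto.
Qed.

Definition emb {M : Type} (d : M -> M -> R) (Hm : is_metric d) (x : M) : WK d :=
  exist _ (prin d x) (prin_ultra d x Hm).

Lemma Obas_emb {M : Type} (d : M -> M -> R) (Hm : is_metric d) U x :
  Obas d U (emb d Hm x) <-> U x.
Proof.
  split.
  - intros [C [[_ Cx] HCU]]. auto.
  - intro Ux. exists (fun y => y = x). split. split. apply mclosed_single; auto. auto.
    intros y ->. auto.
Qed.

Fixpoint Dfix {M : Type} (Cs : nat -> M -> Prop) (n : nat) : M -> Prop :=
  match n with
  | O => Cs O
  | S m => fun w => Dfix Cs m w /\ Cs (S m) w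
  end.

Lemma Dfix_mono {M : Type} (Cs : nat -> M -> Prop) n m w :
  (n <= m)%nat -> Dfix Cs m w -> Dfix Cs n w.
Proof.
  intro H. induction H; auto. intros [H1 _]. auto.
Qed.

Lemma Dfix_sub {M : Type} (Cs : nat -> M -> Prop) n w : Dfix Cs n w -> Cs n w.
Proof. destruct n; simpl; tauto. Qed.

Lemma Dfix_in {M : Type} (d : M -> M -> R) p Cs n :
  ultra d p -> (forall n, p (Cs n)) -> p (Dfix Cs n).
Proof.
  intros Hu HC. induction n; simpl; auto. apply (ultra_inter d); auto.
Qed.

Lemma cech_of_complete {M : Type} (opM : (M -> Prop) -> Prop) (d : M -> M -> R) :
  is_metric d -> metric_complete d -> (forall U, opM U <-> metric_open d U) ->
  cech_complete opM.
Proof.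
  intros Hm Hcpl HopM.
  pose proof Hm as [H0 [H1 [Hs Ht]]].
  assert (Hd00 : forall x, d x x = 0) by (intro; apply H1; auto).
  exists (WK d), (opK d), (emb d Hm).
  split. apply opK_top. split. apply WK_hausdorff; auto. split. apply WK_compact; auto.
  split.
  { intros x y Hxy. assert (E : prin d x = prin d y) by (apply (f_equal (@proj1_sig _ _)) in Hxy; exact Hxy).
    assert (Hx : prin d x (fun w => w = x)) by (split; [apply mclosed_single; auto|auto]).
    rewrite E in Hx. destruct Hx as [_ Hx]. auto. }
  split.
  { intros V HV. apply HopM. intros x Vx. destruct (HV _ Vx) as [U [HU [HUx HUV]]].
    apply Obas_emb in HUx. destruct (HU x HUx) as [r [Hr Hb]]. exists r. split; auto.
    intros y Hy. apply HUV. apply Obas_emb. auto. }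
  split.
  { intros U HU. exists (Obas d U). split. apply Obas_open. apply HopM; auto.
    intro x. rewrite Obas_emb. tauto. }
  split.
  { intros k W HW Wk. destruct (HW k Wk) as [U [HU [[C [Ck HCU]] HUW]]].
    destruct (ultra_nonempty d _ C (proj2_sig k) Ck) as [x Cx].
    exists (emb d Hm x). split. apply HUW. apply Obas_emb. auto. exists x; auto. }
  exists (fun n k => exists C y, proj1_sig k C /\ forall w, C w -> d y w < / (INR n + 1)).
  split.
  { intros n k [C [y [Ck HC]]]. exists (fun w => d y w < / (INR n + 1)). split.
    - intros w Hw. exists (/ (INR n + 1) - d y w). split. lra. intros v Hv.
      pose proof (Ht y w v). lra.
    - split. exists C. auto. intros k' [C' [HC' HC'U]]. exists C', y. auto. }
  intro k. split.
  2:{ intros [x <-] n. exists (fun w => w = x), x. split.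
      split. apply mclosed_single; auto. auto.
      intros w ->. rewrite Hd00. apply Rinv_0_lt_compat. pose proof (pos_INR n). lra. }
  intro H.
  assert (Hc : forall n, {Cy : (M -> Prop) * M | proj1_sig k (fst Cy) /\
                 forall w, fst Cy w -> d (snd Cy) w < / (INR n + 1)}).
  { intro n. apply constructive_indefinite_description. destruct (H n) as [C [y HCy]].
    exists (C, y). exact HCy. }
  set (Cs := fun n => fst (proj1_sig (Hc n))).
  set (ys := fun n => snd (proj1_sig (Hc n))).
  assert (HCs : forall n, proj1_sig k (Cs n)) by (intro n; apply (proj2_sig (Hc n))).
  assert (Hys : forall n w, Cs n w -> d (ys n) w < / (INR n + 1)) by (intro n; apply (proj2_sig (Hc n))).
  assert (Hz : forall n, {z | Dfix Cs n z}).
  { intro n. apply constructive_indefinite_description.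
    apply (ultra_nonempty d (proj1_sig k)). apply (proj2_sig k).
    apply (Dfix_in d); auto. apply (proj2_sig k). }
  set (z := fun n => proj1_sig (Hz n)).
  assert (Hzn : forall n m, (n <= m)%nat -> Cs n (z m)).
  { intros n m Hnm. apply Dfix_sub. apply (Dfix_mono Cs n m); auto. apply (proj2_sig (Hz m)). }
  destruct (Hcpl z) as [x Hx].
  { intros eps He. destruct (arch_inv (eps/2)) as [N HN]. lra.
    exists N. intros m n Hm' Hn'.
    pose proof (Hys N (z m) (Hzn N m Hm')). pose proof (Hys N (z n) (Hzn N n Hn')).
    pose proof (HN N (le_n N)). pose proof (Ht (z m) (ys N) (z n)). pose proof (Hs (z m) (ys N)). lra. }
  assert (Hall : forall C, proj1_sig k C -> C x).
  { intros C HC. apply NNPP. intro HnC.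
    destruct (proj1 (proj2_sig k) C HC x HnC) as [r [Hr Hb]].
    destruct (arch_inv (r/4)) as [N1 HN1]. lra.
    destruct (Hx (r/2)) as [N2 HN2]. lra.
    set (n := Nat.max N1 N2).
    destruct (ultra_nonempty d (proj1_sig k) (fun w => C w /\ Dfix Cs n w)) as [w [Cw Dw]].
    apply (proj2_sig k). apply (ultra_inter d); auto. apply (proj2_sig k). apply (Dfix_in d); auto. apply (proj2_sig k).
    apply (Hb w); auto.
    pose proof (Hys n w (Dfix_sub Cs n w Dw)). pose proof (Hzn n n (le_n n)) as Hzz.
    apply Hys in Hzz. pose proof (HN1 n (Nat.le_max_l N1 N2)). pose proof (HN2 n (Nat.le_max_r N1 N2)).
    pose proof (Ht x (z n) w). pose proof (Ht (z n) (ys n) w).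
    pose proof (Hs x (z n)). pose proof (Hs (z n) (ys n)). lra. }
  exists x. apply WK_ext. intro C. simpl. split.
  - intro HC. destruct (proj2_sig k) as [_ [_ Hmax]]. apply (Hmax (prin d x)); auto.
    apply (proj1 (prin_ultra d x Hm)). apply (proj1 (proj2 (prin_ultra d x Hm))).
    intros C' HC'. split. apply (proj1 (proj2_sig k)); auto. apply Hall; auto.
  - intro HC. split. apply (proj1 (proj2_sig k)); auto. apply Hall; auto.
Qed.


Definition fc_at {A : Type} (op : (A -> Prop) -> Prop) (x : A) : Prop :=
  exists B : nat -> (A -> Prop), (forall n, op (B n) /\ B n x) /\
    (forall U, op U -> U x -> exists n, forall y, B n y -> U y).

Lemma metrizable_fc {A : Type} (op : (A -> Prop) -> Prop) :
  metrizable op -> first_countable op.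
Proof.
  intros [d [[H0 [H1 [Hs Ht]]] Hop]] x.
  exists (fun n y => d x y < / (INR n + 1)). split.
  - intro n. split.
    + apply Hop. intros y Hy. exists (/ (INR n + 1) - d x y). split. lra.
      intros w Hw. pose proof (Ht x y w). lra.
    + assert (d x x = 0) by (apply H1; auto). rewrite H.
      apply Rinv_0_lt_compat. pose proof (pos_INR n). lra.
  - intros U HU Ux. apply Hop in HU. destruct (HU x Ux) as [eps [He Hb]].
    destruct (arch_inv eps He) as [N HN]. exists N. intros y Hy. apply Hb.
    pose proof (HN N (le_n N)). lra.
Qed.

Lemma metrizable_frechet {A : Type} (op : (A -> Prop) -> Prop) :
  metrizable op -> frechet_urysohn op.
Proof.
  intros [d [[H0 [H1 [Hs Ht]]] Hop]] P x Hcl.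
  assert (Hn : forall n, {y | P y /\ d x y < / (INR n + 1)}).
  { intro n. apply constructive_indefinite_description.
    destruct (Hcl (fun y => d x y < / (INR n + 1))) as [y [Hy Py]].
    - apply Hop. intros y Hy. exists (/ (INR n + 1) - d x y). split. lra.
      intros w Hw. pose proof (Ht x y w). lra.
    - assert (d x x = 0) by (apply H1; auto). rewrite H.
      apply Rinv_0_lt_compat. pose proof (pos_INR n). lra.
    - exists y. auto. }
  exists (fun n => proj1_sig (Hn n)). split.
  - intro n. apply (proj2_sig (Hn n)).
  - intros U HU Ux. apply Hop in HU. destruct (HU x Ux) as [eps [He Hb]].
    destruct (arch_inv eps He) as [N HN]. exists N. intros n Hnn. apply Hb.
    destruct (proj2_sig (Hn n)) as [_ Hd]. pose proof (HN n Hnn). lra.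
Qed.

Lemma range_countable {A : Type} (s : nat -> A) : countable_set (fun y => exists n, s n = y).
Proof.
  exists (fun y => epsilon (inhabits 0%nat) (fun n => s n = y)).
  intros y z Hy Hz E.
  pose proof (epsilon_spec (inhabits 0%nat) (fun n => s n = y) Hy) as Ey.
  pose proof (epsilon_spec (inhabits 0%nat) (fun n => s n = z) Hz) as Ez.
  simpl in *. rewrite <- Ey, <- Ez. rewrite E. reflexivity.
Qed.

Lemma frechet_tight {A : Type} (op : (A -> Prop) -> Prop) :
  frechet_urysohn op -> countable_tightness op.
Proof.
  intros Hf P x Hcl. destruct (Hf P x Hcl) as [s [Hs Hcv]].
  exists (fun y => exists n, s n = y). split; [|split].
  - intros y [n <-]. auto.
  - apply range_countable.
  - intros U HU Ux. destruct (Hcv U HU Ux) as [N HN]. exists (s N). split. apply HN; auto. exists N; auto.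
Qed.

Lemma cm_metrizable {A : Type} (op : (A -> Prop) -> Prop) :
  completely_metrizable op -> metrizable op.
Proof. intros [d [H1 [_ H3]]]. exists d. auto. Qed.

Lemma cpt_regular {K : Type} (opK : (K -> Prop) -> Prop) k0 U :
  is_topology opK -> hausdorff opK -> Defs.compact opK -> opK U -> U k0 ->
  exists O, opK O /\ O k0 /\ forall k, ~ U k -> exists V, opK V /\ V k /\ forall y, ~ (O y /\ V y).
Proof.
  intros Ht Hh Hc HU Uk0.
  set (F := fun V => V = U \/ exists k A, ~ U k /\ opK A /\ A k0 /\ opK V /\ V k /\ forall y, ~ (A y /\ V y)).
  destruct (Hc F) as [l [Hl Hcov]].
  - intros V [->|[k [A [_ [_ [_ [HV _]]]]]]]; auto.
  - intro k. destruct (classic (U k)) as [Uk|Uk].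
    + exists U. split; auto. left; auto.
    + assert (k0 <> k) by (intro; subst; auto).
      destruct (Hh k0 k H) as [A [V [HA [HV [Ak0 [Vk Hdis]]]]]].
      exists V. split; [|exact Vk]. right. exists k, A. tauto.
  - assert (Hb : forall l', (forall V, In V l' -> F V) -> exists O, opK O /\ O k0 /\
        forall V, In V l' -> V = U \/ forall y, ~ (O y /\ V y)).
    { induction l' as [|V0 l' IH]; intro Hl'.
      - exists (fun _ => True). split. apply op_True; auto. split. exact I. intros V' [].
      - destruct IH as [O [HO [Ok0 HOl]]]. intros V' H'. apply Hl'. right; auto.
        destruct (Hl' V0 (or_introl eq_refl)) as [->|[kk [AA [_ [HAA [AAk0 [_ [_ Hdis2]]]]]]]].
        + exists O. split; auto. split; auto. intros V' [<-|H']; auto.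
        + exists (fun y => O y /\ AA y). split. apply op_inter; auto. split; auto.
          intros V' [<-|H'].
          * right. intros y [[_ Ay] Vy]. apply (Hdis2 y). auto.
          * destruct (HOl V' H') as [E|E]; auto. right. intros y [[Oy _] V'y]. apply (E y). auto. }
    destruct (Hb l Hl) as [O [HO [Ok0 HOl]]]. exists O. split; auto. split; auto.
    intros k Uk. destruct (Hcov k) as [V [HVl Vk]].
    destruct (HOl V HVl) as [E|E].
    + subst. contradiction.
    + exists V. split. destruct (Hl V HVl) as [->|[k' [A [_ [_ [_ [HV _]]]]]]]; auto.
      split; auto.
Qed.

Definition ext_of {K : Type} (opK : (K -> Prop) -> Prop) (S : K -> Prop) : K -> Prop :=
  fun k => exists V, opK V /\ V k /\ forall y, ~ (S y /\ V y).

Lemma Dfix_open {K : Type} (opK : (K -> Prop) -> Prop) (O : nat -> K -> Prop) n :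
  is_topology opK -> (forall n, opK (O n)) -> opK (Dfix O n).
Proof. intros Ht HO. induction n; simpl; auto. apply op_inter; auto. Qed.

Lemma cpt_fc {K : Type} (opK : (K -> Prop) -> Prop) k0 (Q : nat -> K -> Prop) :
  is_topology opK -> hausdorff opK -> Defs.compact opK ->
  (forall n, opK (Q n) /\ Q n k0) -> (forall k, (forall n, Q n k) -> k = k0) -> fc_at opK k0.
Proof.
  intros Ht Hh Hc HQ HQ0.
  assert (HO : forall n, {O | opK O /\ O k0 /\ forall k, ~ Q n k -> ext_of opK O k}).
  { intro n. apply constructive_indefinite_description.
    destruct (HQ n) as [HQn HQk].
    destruct (cpt_regular opK k0 (Q n) Ht Hh Hc HQn HQk) as [O [HO [Ok0 HOe]]].
    exists O. split; auto. }
  set (O := fun n => proj1_sig (HO n)).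
  assert (HOo : forall n, opK (O n)) by (intro n; apply (proj2_sig (HO n))).
  assert (HOk : forall n, O n k0) by (intro n; apply (proj2_sig (HO n))).
  assert (HOe : forall n k, ~ Q n k -> ext_of opK (O n) k) by (intro n; apply (proj2_sig (HO n))).
  assert (HDk : forall n, Dfix O n k0).
  { induction n; simpl; auto. }
  assert (Hmono : forall n m k, (n <= m)%nat -> ext_of opK (Dfix O n) k -> ext_of opK (Dfix O m) k).
  { intros n m k Hnm [V [HV [Vk Hdis]]]. exists V. split; auto. split; auto.
    intros y [Dy Vy]. apply (Hdis y). split; auto. apply (Dfix_mono O n m); auto. }
  exists (Dfix O). split.
  - intro n. split. apply Dfix_open; auto. auto.
  - intros U HU Uk0.
    set (F := fun V => V = U \/ exists n, V = ext_of opK (Dfix O n)).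
    destruct (Hc F) as [l [Hl Hcov]].
    + intros V [->|[n ->]]; auto. apply op_local; auto.
      intros k [V [HV [Vk Hdis]]]. exists V. split; auto. split; auto.
      intros y Vy. exists V. auto.
    + intro k. destruct (classic (k = k0)) as [->|Hne].
      * exists U. split; auto. left; auto.
      * assert (Hn : exists n, ~ Q n k).
        { apply NNPP. intro Hn. apply Hne. apply HQ0. intro n. apply NNPP. intro. apply Hn. exists n; auto. }
        destruct Hn as [n Hn]. exists (ext_of opK (Dfix O n)). split. right. exists n; auto.
        destruct (HOe n k Hn) as [V [HV [Vk Hdis]]]. exists V. split; auto. split; auto.
        intros y [Dy Vy]. apply (Hdis y). split; auto. apply Dfix_sub; auto.
    + assert (Hb : forall l', (forall V, In V l' -> F V) -> exists N, forall M, (N <= M)%nat ->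
          forall V, In V l' -> V = U \/ forall k, V k -> ext_of opK (Dfix O M) k).
      { induction l' as [|V l' IH]; intro Hl'.
        - exists 0%nat. intros M _ V [].
        - destruct IH as [N HN]. intros V' H'. apply Hl'. right; auto.
          destruct (Hl' V (or_introl eq_refl)) as [->|[n ->]].
          + exists N. intros M HM V' [<-|H']; auto.
          + exists (Nat.max N n). intros M HM V' [<-|H'].
            * right. intros k Hk. apply (Hmono n M); auto. lia.
            * apply (HN M); auto. lia. }
      destruct (Hb l Hl) as [N HN]. exists N. intros y Dy.
      destruct (Hcov y) as [V [HVl Vy]]. destruct (HN N (le_n N) V HVl) as [->|E]; auto.
      destruct (E y Vy) as [V' [HV' [V'y Hdis]]]. exfalso. apply (Hdis y). auto.
Qed.

Lemma cech_fc_at {A : Type} (opA : (A -> Prop) -> Prop) x (W : nat -> A -> Prop) :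
  cech_complete opA -> (forall n, opA (W n) /\ W n x) -> (forall y, (forall n, W n y) -> y = x) ->
  fc_at opA x.
Proof.
  intros [K [opK [e [Ht [Hh [Hc [Hinj [Hcont [Hopen [_ [V [HV HVe]]]]]]]]]]]] HW HWx.
  assert (HW' : forall n, {W' | opK W' /\ forall y, W n y <-> W' (e y)}).
  { intro n. apply constructive_indefinite_description. apply Hopen. apply HW. }
  set (W' := fun n => proj1_sig (HW' n)).
  assert (HW'o : forall n, opK (W' n)) by (intro n; apply (proj2_sig (HW' n))).
  assert (HW'e : forall n y, W n y <-> W' n (e y)) by (intro n; apply (proj2_sig (HW' n))).
  destruct (cpt_fc opK (e x) (fun n k => V n k /\ W' n k)) as [B [HB1 HB2]]; auto.
  - intro n. split. apply op_inter; auto. split. apply HVe. exists x; auto. apply HW'e. apply HW.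
  - intros k Hk. destruct (proj1 (HVe k) (fun n => proj1 (Hk n))) as [y <-].
    f_equal. apply HWx. intro n. apply HW'e. apply Hk.
  - exists (fun n y => B n (e y)). split.
    + intro n. split. apply Hcont. apply HB1. apply HB1.
    + intros U HU Ux. destruct (Hopen U HU) as [V' [HV' HUV']].
      destruct (HB2 V' HV') as [n Hn]. apply HUV'; auto. exists n. intros y Hy. apply HUV'. auto.
Qed.


Lemma CX_ext {T : Type} (op : (T -> Prop) -> Prop) (f g : CX op) :
  (forall t, proj1_sig f t = proj1_sig g t) -> f = g.
Proof.
  destruct f as [f Hf], g as [g Hg]. simpl. intro H.
  assert (f = g) by (apply functional_extensionality; auto). subst. f_equal. apply proof_irrelevance.
Qed.

Definition zf {T : Type} (op : (T -> Prop) -> Prop) (Ht : is_topology op) : CX op :=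
  exist _ (fun _ => 0) (cont_const op 0 Ht).

Definition P0 {T : Type} (op : (T -> Prop) -> Prop) (Ht : is_topology op) : Prop :=
  forall A, closure (graph_open op) A (zf op Ht) ->
    exists B, (forall y, B y -> A y) /\ countable_set B /\ closure (graph_open op) B (zf op Ht).

Lemma fc_at_P0 {T : Type} (op : (T -> Prop) -> Prop) (Ht : is_topology op) :
  fc_at (graph_open op) (zf op Ht) -> P0 op Ht.
Proof.
  intros [B [HB1 HB2]] A Hcl.
  assert (Hs : forall n, {y | B n y /\ A y}).
  { intro n. apply constructive_indefinite_description. apply Hcl; apply HB1. }
  exists (fun y => exists n, proj1_sig (Hs n) = y). split; [|split].
  - intros y [n <-]. apply (proj2_sig (Hs n)).
  - apply range_countable.
  - intros U HU Uz. destruct (HB2 U HU Uz) as [n Hn]. exists (proj1_sig (Hs n)). split.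
    apply Hn. apply (proj2_sig (Hs n)). exists n; auto.
Qed.

Lemma fc_P0 {T : Type} (op : (T -> Prop) -> Prop) (Ht : is_topology op) :
  first_countable (graph_open op) -> P0 op Ht.
Proof. intro H. apply fc_at_P0. apply H. Qed.

Lemma tight_P0 {T : Type} (op : (T -> Prop) -> Prop) (Ht : is_topology op) :
  countable_tightness (graph_open op) -> P0 op Ht.
Proof. intros H A Hcl. apply H. auto. Qed.

Definition Gn (n : nat) {T : Type} : T * R -> Prop := fun p => Rabs (snd p) < / (INR n + 1).

Lemma Gn_open {T : Type} (op : (T -> Prop) -> Prop) n :
  is_topology op -> prod_open op (@Gn n T).
Proof.
  intros Ht x r Hr. unfold Gn in *. simpl in Hr.
  exists (fun _ => True), (/ (INR n + 1) - Rabs r). split. apply op_True; auto.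
  split. auto. split. lra. intros y s _ Hs. simpl.
  pose proof (Rabs_triang (s - r) r). replace (s - r + r) with s in H by ring. lra.
Qed.

Lemma cech_P0 {T : Type} (op : (T -> Prop) -> Prop) (Ht : is_topology op) :
  cech_complete (graph_open op) -> P0 op Ht.
Proof.
  intro Hc. apply fc_at_P0.
  apply (cech_fc_at _ _ (fun n => F_G op (@Gn n T))); auto.
  - intro n. split.
    + intros f Hf. exists (@Gn n T). split. apply Gn_open; auto. auto.
    + intro t. unfold Gn. simpl. rewrite Rabs_R0. apply Rinv_0_lt_compat. pose proof (pos_INR n). lra.
  - intros y Hy. apply CX_ext. intro t. simpl. apply NNPP. intro Hne.
    assert (Hp : 0 < Rabs (proj1_sig y t)) by (apply Rabs_pos_lt; auto).
    destruct (arch_inv _ Hp) as [N HN]. specialize (Hy N t). unfold Gn in Hy. simpl in Hy.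
    pose proof (HN N (le_n N)). lra.
Qed.

Fixpoint kseq (c : nat -> nat) (j : nat) : nat :=
  match j with O => O | S j' => c (kseq c j') end.

Lemma kseq_ge (c : nat -> nat) : (forall n, (n < c n)%nat) -> forall i, (i <= kseq c i)%nat.
Proof. intros Hc i. induction i; simpl. lia. pose proof (Hc (kseq c i)). lia. Qed.

Lemma kseq_mono (c : nat -> nat) : (forall n, (n < c n)%nat) ->
  forall i j, (i <= j)%nat -> (kseq c i <= kseq c j)%nat.
Proof.
  intros Hc i j H. induction H. lia. simpl. pose proof (Hc (kseq c m)). lia.
Qed.

Lemma notcc_seq {T : Type} (op : (T -> Prop) -> Prop) :
  is_topology op -> T1_space op -> ~ countably_compact op ->
  exists x : nat -> T, (forall i j, x i = x j -> i = j) /\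
    forall t, exists W, op W /\ W t /\ forall i, W (x i) -> x i = t.
Proof.
  intros Ht HT1 Hncc.
  unfold countably_compact in Hncc.
  apply not_all_ex_not in Hncc. destruct Hncc as [U HU].
  apply imply_to_and in HU. destruct HU as [HUo HU].
  apply imply_to_and in HU. destruct HU as [HUc HU].
  assert (Hy : forall N, {t | forall n, (n <= N)%nat -> ~ U n t}).
  { intro N. apply constructive_indefinite_description. apply NNPP. intro Hn.
    apply HU. exists (seq 0 (S N)). intro x. apply NNPP. intro Hx. apply Hn. exists x.
    intros n Hn' Unx. apply Hx. exists n. split; auto. apply in_seq. lia. }
  set (y := fun N => proj1_sig (Hy N)).
  assert (Hyp : forall N n, (n <= N)%nat -> ~ U n (y N)) by (intro N; apply (proj2_sig (Hy N))).
  assert (Hcn : forall N, {n | U n (y N)}).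
  { intro N. apply constructive_indefinite_description. apply HUc. }
  set (c := fun N => proj1_sig (Hcn N)).
  assert (HcU : forall N, U (c N) (y N)) by (intro N; apply (proj2_sig (Hcn N))).
  assert (Hc : forall N, (N < c N)%nat).
  { intro N. destruct (le_lt_dec (c N) N) as [H|H]; auto. exfalso. apply (Hyp N (c N) H). auto. }
  set (x := fun j => y (kseq c j)).
  assert (Hx1 : forall j, U (kseq c (S j)) (x j)) by (intro j; apply HcU).
  assert (Hx2 : forall j i, (S j <= i)%nat -> ~ U (kseq c (S j)) (x i)).
  { intros j i H. apply Hyp. apply kseq_mono; auto. }
  assert (Hx3 : forall m i, (m <= i)%nat -> ~ U m (x i)).
  { intros m i H. apply Hyp. pose proof (kseq_ge c Hc i). lia. }
  exists x. split.
  - intros i j E. destruct (lt_eq_lt_dec i j) as [[H|H]|H]; auto.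
    + exfalso. apply (Hx2 i j H). rewrite <- E. auto.
    + exfalso. apply (Hx2 j i H). rewrite E. auto.
  - intro t. destruct (HUc t) as [m Hm].
    assert (Hb : forall j, exists W, op W /\ W t /\ (forall z, W z -> U m z) /\
                 forall i, (i < j)%nat -> W (x i) -> x i = t).
    { induction j.
      - exists (U m). split; auto. split; auto. split; auto. intros i Hi. lia.
      - destruct IHj as [W [HW [Wt [HWU HWi]]]].
        destruct (classic (x j = t)) as [E|E].
        + exists W. split; auto. split; auto. split; auto. intros i Hi Wi.
          destruct (Nat.eq_dec i j). subst; auto. apply HWi; auto. lia.
        + destruct (HT1 t (x j)) as [O [HO [Ot Oxj]]]. auto.
          exists (fun z => W z /\ O z). split. apply op_inter; auto. split; auto. split.
          intros z [Wz _]; auto.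
          intros i Hi [Wi Oi]. destruct (Nat.eq_dec i j). subst; contradiction. apply HWi; auto. lia. }
    destruct (Hb m) as [W [HW [Wt [HWU HWi]]]]. exists W. split; auto. split; auto.
    intros i Wi. destruct (lt_dec i m) as [H|H]. apply HWi; auto.
    exfalso. apply (Hx3 m i). lia. apply HWU; auto.
Qed.

Lemma no_countable_B {T : Type} (op : (T -> Prop) -> Prop) (Ht : is_topology op) (x : nat -> T) :
  (forall i j, x i = x j -> i = j) ->
  (forall t, exists W, op W /\ W t /\ forall i, W (x i) -> x i = t) ->
  forall B : CX op -> Prop, (forall f, B f -> forall n, proj1_sig f (x n) <> 0) ->
  countable_set B -> ~ closure (graph_open op) B (zf op Ht).
Proof.
  intros Hinj Hdisc B HB [g Hg] Hcl.
  set (G := fun p : T * R => forall n f, fst p = x n -> B f -> g f = n ->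
              Rabs (snd p) < Rabs (proj1_sig f (x n))).
  assert (HGo : prod_open op G).
  { intros t r Htr. destruct (Hdisc t) as [W [HW [Wt HWx]]].
    destruct (classic (exists n f, t = x n /\ B f /\ g f = n)) as [[n0 [f0 [E0 [Bf0 gf0]]]]|Hne].
    - assert (Hr := Htr n0 f0 E0 Bf0 gf0). simpl in Hr.
      exists W, (Rabs (proj1_sig f0 (x n0)) - Rabs r). split; auto. split; auto. split. lra.
      intros y s Wy Hs n f Eyn Bf gfn. simpl in *. subst y.
      assert (E1 : x n = t) by (apply HWx; auto).
      assert (n = n0) by (apply Hinj; congruence). subst n.
      assert (f = f0) by (apply Hg; auto; congruence). subst f.
      rewrite H. pose proof (Rabs_triang (s - r) r) as Htr2. replace (s - r + r) with s in Htr2 by ring. lra.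
    - exists W, 1. split; auto. split; auto. split. lra.
      intros y s Wy Hs n f Eyn Bf gfn. simpl in *. subst y. exfalso. apply Hne.
      exists n, f. split; auto. symmetry. apply HWx; auto. }
  destruct (Hcl (F_G op G)) as [y [Gy By]].
  - intros f Hf. exists G. auto.
  - intros t n f _ Bf _. simpl. rewrite Rabs_R0. apply Rabs_pos_lt. apply HB; auto.
  - specialize (Gy (x (g y)) (g y) y eq_refl By eq_refl). simpl in Gy. lra.
Qed.

Fixpoint psum (a : nat -> R) (N : nat) : R :=
  match N with O => 0 | S N' => psum a N' + a N' end.

Lemma psum_mono a N M : (forall n, 0 <= a n) -> (N <= M)%nat -> psum a N <= psum a M.
Proof.
  intros Ha H. induction H. lra. simpl. pose proof (Ha m). lra.
Qed.

Lemma psum_tail a N K : (forall n, (N <= n)%nat -> a n <= K * (/2)^(S (S n))) ->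
  forall k, psum a (N + k) - psum a N <= K * (/2)^(S N) - K * (/2)^(S (N + k)).
Proof.
  intros Ha k. induction k.
  - rewrite Nat.add_0_r. lra.
  - rewrite Nat.add_succ_r. simpl psum.
    assert (E : (/2)^(S (S (N + k))) = /2 * (/2)^(S (N + k))) by reflexivity.
    pose proof (Ha (N + k)%nat ltac:(lia)) as Hb. rewrite E in *.
    assert (E2 : K * (/ 2 * (/ 2) ^ S (N + k)) = /2 * (K * (/2)^(S (N + k)))) by ring.
    rewrite E2 in *. lra.
Qed.

Lemma pow_half_le1 n : (/2)^n <= 1.
Proof. induction n; simpl. lra. pose proof (pow_le (/2) n ltac:(lra)). lra. Qed.

Lemma pow_half_bound n : (/2)^n * (INR n + 1) <= 1.
Proof.
  induction n. simpl. lra.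
  rewrite S_INR. simpl. pose proof (pow_le (/2) n ltac:(lra)). pose proof (pos_INR n).
  assert (/ 2 * (/ 2) ^ n * (INR n + 1 + 1) <= / 2 * (/ 2) ^ n * (2 * (INR n + 1))).
  { apply Rmult_le_compat_l. nra. lra. }
  nra.
Qed.

Lemma pow_half_small eps : 0 < eps -> exists N, (/2)^(S N) < eps.
Proof.
  intro He. destruct (arch_inv eps He) as [N HN]. exists N. pose proof (HN N (le_n N)).
  pose proof (pow_half_bound N). pose proof (pos_INR N).
  assert ((/2)^N <= / (INR N + 1)).
  { apply (Rmult_le_reg_r (INR N + 1)). lra. rewrite Rinv_l. lra. lra. }
  simpl. pose proof (pow_le (/2) N ltac:(lra)). lra.
Qed.

Fixpoint mfix (w : nat -> R) (n : nat) : R :=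
  match n with O => Rmin 1 (w O) | S m => Rmin (mfix w m) (w (S m)) end.

Lemma mfix_props (w : nat -> R) : (forall n, 0 < w n) ->
  forall n, 0 < mfix w n /\ mfix w n <= 1 /\ mfix w n <= w n.
Proof.
  intros Hw n. induction n; simpl.
  - pose proof (Hw O). repeat split. apply Rmin_case; lra. apply Rmin_l. apply Rmin_r.
  - pose proof (Hw (S n)). destruct IHn as [H1 [H2 H3]]. repeat split.
    apply Rmin_case; lra. pose proof (Rmin_l (mfix w n) (w (S n))); lra. apply Rmin_r.
Qed.

Lemma mfix_anti (w : nat -> R) n m : (n <= m)%nat -> mfix w m <= mfix w n.
Proof. intro H. induction H. lra. simpl. pose proof (Rmin_l (mfix w m) (w (S m))). lra. Qed.

Lemma least_nat (P : nat -> Prop) : (exists n, P n) -> exists n, P n /\ forall m, (m < n)%nat -> ~ P m.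
Proof.
  intros [n Hn]. apply NNPP. intro Hno. revert Hn. pattern n. apply (well_founded_ind lt_wf).
  intros k IH Pk. apply Hno. exists k. split; [exact Pk|]. intros m Hm Pm. apply (IH m Hm Pm).
Qed.

Lemma closure_A {T : Type} (op : (T -> Prop) -> Prop) (Ht : is_topology op) (x : nat -> T) :
  tychonoff op ->
  (forall i j, x i = x j -> i = j) ->
  (forall t, exists W, op W /\ W t /\ forall i, W (x i) -> x i = t) ->
  closure (graph_open op) (fun f => forall n, proj1_sig f (x n) <> 0) (zf op Ht).
Proof.
  intros [_ Hcr] Hinj Hdisc U HU Uz.
  destruct (HU _ Uz) as [G [HG [Gz HGU]]].
  unfold F_G, graph_in in Gz. simpl in Gz.
  assert (Hbump : forall n, {p : R * (T -> R) | 0 < fst p /\ continuous op R_open (snd p) /\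
     (forall t, 0 <= snd p t <= 1) /\ snd p (x n) = 1 /\ (forall m, m <> n -> snd p (x m) = 0) /\
     forall t, snd p t <> 0 -> forall s, Rabs s < fst p -> G (t, s)}).
  { intro n. apply constructive_indefinite_description.
    destruct (HG (x n) 0 (Gz (x n))) as [V [eps [HV [Vx [He Hb]]]]].
    destruct (Hdisc (x n)) as [W [HW [Wx HWx]]].
    assert (HO : op (fun t => V t /\ W t)) by (apply op_inter; auto).
    destruct (Hcr (fun t => ~ (V t /\ W t)) (x n)) as [psi [Hpc [Hpb [Hp0 Hp1]]]].
    - unfold is_closed. apply (op_ext op _ _ HO). intro t. split; [tauto|]. intro H. apply NNPP. exact H.
    - tauto.
    - exists (eps, fun t => 1 - psi t). simpl. split; [exact He|]. split.
      apply cont_minus_const; auto. split.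
      intro t. pose proof (Hpb t). lra. split. rewrite Hp0. lra. split.
      + intros m Hm. rewrite Hp1. lra. intros [_ Wm]. apply Hm. apply Hinj. apply HWx. auto.
      + intros t Ht0 s Hs. destruct (classic (V t /\ W t)) as [[Vt _]|Hn].
        * apply Hb; auto. rewrite Rminus_0_r. auto.
        * exfalso. apply Ht0. rewrite Hp1; auto. lra. }
  set (w := fun n => fst (proj1_sig (Hbump n))).
  set (phi := fun n => snd (proj1_sig (Hbump n))).
  assert (Hw : forall n, 0 < w n) by (intro n; apply (proj2_sig (Hbump n))).
  assert (Hpc : forall n, continuous op R_open (phi n)) by (intro n; apply (proj2_sig (Hbump n))).
  assert (Hpb : forall n t, 0 <= phi n t <= 1) by (intro n; apply (proj2_sig (Hbump n))).
  assert (Hp1 : forall n, phi n (x n) = 1) by (intro n; apply (proj2_sig (Hbump n))).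
  assert (HpG : forall n t, phi n t <> 0 -> forall s, Rabs s < w n -> G (t, s))
    by (intro n; apply (proj2_sig (Hbump n))).
  clearbody w phi. clear Hbump.
  pose proof (mfix_props w Hw) as Hm.
  set (a := fun n t => mfix w n * (/2)^(S (S n)) * phi n t).
  assert (Ha0 : forall n t, 0 <= a n t).
  { intros n t. unfold a. destruct (Hm n) as [? _]. pose proof (pow_le (/2) (S (S n)) ltac:(lra)).
    pose proof (Hpb n t). apply Rmult_le_pos; [apply Rmult_le_pos|]; lra. }
  assert (Ha1 : forall n0 n t, (n0 <= n)%nat -> a n t <= mfix w n0 * (/2)^(S (S n))).
  { intros n0 n t H. unfold a. pose proof (mfix_anti w n0 n H). destruct (Hm n) as [? _].
    pose proof (pow_le (/2) (S (S n)) ltac:(lra)). pose proof (Hpb n t).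
    assert (mfix w n * (/ 2) ^ S (S n) * phi n t <= mfix w n * (/ 2) ^ S (S n) * 1).
    { apply Rmult_le_compat_l. apply Rmult_le_pos; lra. lra. }
    assert (mfix w n * (/ 2) ^ S (S n) <= mfix w n0 * (/ 2) ^ S (S n)).
    { apply Rmult_le_compat_r; lra. }
    lra. }
  assert (Ha2 : forall n t, a n t <= 1 * (/2)^(S (S n))).
  { intros n t. pose proof (Ha1 O n t ltac:(lia)). destruct (Hm O) as [_ [? _]].
    pose proof (pow_le (/2) (S (S n)) ltac:(lra)). nra. }
  set (Sp := fun N t => psum (fun n => a n t) N).
  assert (HSmono : forall t N M, (N <= M)%nat -> Sp N t <= Sp M t).
  { intros t N M H. apply psum_mono; auto. }
  assert (HStail : forall t N M, (N <= M)%nat -> Sp M t <= Sp N t + (/2)^(S N)).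
  { intros t N M H. replace M with (N + (M - N))%nat by lia.
    pose proof (psum_tail (fun n => a n t) N 1 (fun n _ => Ha2 n t) (M - N)).
    pose proof (pow_le (/2) (S (N + (M - N))) ltac:(lra)). unfold Sp. lra. }
  assert (HSbd : forall t N, Sp N t <= 1).
  { intros t N. pose proof (HStail t O N ltac:(lia)). simpl in H. unfold Sp in *. simpl in H. lra. }
  assert (Hlub : forall t, {L | is_lub (fun r => exists N, r = Sp N t) L}).
  { intro t. apply completeness.
    - exists 1. intros r [N ->]. auto.
    - exists (Sp O t). exists O. auto. }
  set (L := fun t => proj1_sig (Hlub t)).
  assert (HL1 : forall t N, Sp N t <= L t).
  { intros t N. apply (proj1 (proj2_sig (Hlub t))). exists N; auto. }
  assert (HL2 : forall t b, (forall N, Sp N t <= b) -> L t <= b).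
  { intros t b Hb. apply (proj2 (proj2_sig (Hlub t))). intros r [N ->]. auto. }
  assert (HL3 : forall t N, L t <= Sp N t + (/2)^(S N)).
  { intros t N. apply HL2. intro M. destruct (le_lt_dec M N) as [H|H].
    - pose proof (HSmono t M N H). pose proof (pow_le (/2) (S N) ltac:(lra)). lra.
    - apply HStail. lia. }
  assert (HScont : forall N, continuous op R_open (Sp N)).
  { induction N.
    - apply cont_const; auto.
    - apply (cont_plus op (Sp N) (a N)); auto. unfold a.
      apply (cont_scal op (mfix w N * (/2)^(S (S N))) (phi N)); auto. }
  assert (HLcont : continuous op R_open L).
  { apply cont_char; auto. intros x0 eps He.
    destruct (pow_half_small (eps/3)) as [N HN]. lra.
    pose proof (proj1 (cont_char op (Sp N) Ht) (HScont N) x0 (eps/3)) as HSN. destruct HSN as [V [HV [Vx0 HVb]]]. lra.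
    exists V. split; auto. split; auto. intros y Vy. specialize (HVb y Vy).
    apply Rabs_def2 in HVb. destruct HVb.
    pose proof (HL1 y N). pose proof (HL1 x0 N). pose proof (HL3 y N). pose proof (HL3 x0 N).
    apply Rabs_def1; lra. }
  exists (exist _ L HLcont). split.
  - apply HGU. unfold F_G, graph_in. simpl. intro t.
    destruct (classic (exists n, phi n t <> 0)) as [Hex|Hnex].
    + destruct (least_nat _ Hex) as [n0 [Hn0 Hlt]].
      assert (HS0 : forall N, (N <= n0)%nat -> Sp N t = 0).
      { induction N; intro HN. reflexivity. unfold Sp in *. simpl. rewrite IHN by lia.
        unfold a. replace (phi N t) with 0. ring. apply NNPP. intro Hne. apply (Hlt N). lia. auto. }
      assert (Hb : forall N, Sp N t <= mfix w n0 * /2).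
      { intro N. destruct (le_lt_dec N n0) as [H|H].
        - rewrite HS0 by auto. destruct (Hm n0); lra.
        - replace N with (n0 + (N - n0))%nat by lia.
          pose proof (psum_tail (fun n => a n t) n0 (mfix w n0) (fun n Hn => Ha1 n0 n t Hn) (N - n0)).
          assert (E0 : psum (fun n => a n t) n0 = 0) by (apply (HS0 n0 (le_n n0))). rewrite E0 in *. unfold Sp in *.
          destruct (Hm n0) as [Hm0 _]. pose proof (pow_le (/2) (S (n0 + (N - n0))) ltac:(lra)).
          assert (E : (/2)^(S n0) = /2 * (/2)^n0) by reflexivity.
          pose proof (pow_half_le1 n0).
          assert (mfix w n0 * (/ 2) ^ S (n0 + (N - n0)) >= 0) by (apply Rle_ge; apply Rmult_le_pos; lra).
          assert (mfix w n0 * (/ 2) ^ S n0 <= mfix w n0 * / 2).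
          { rewrite E. apply Rmult_le_compat_l. lra. pose proof (pow_le (/2) n0 ltac:(lra)). nra. }
          lra. }
      apply (HpG n0 t Hn0). pose proof (HL2 t _ Hb). pose proof (HL1 t O). simpl in H0.
      destruct (Hm n0) as [? [? ?]]. rewrite Rabs_right. simpl. lra. simpl. unfold Sp in H0. simpl in H0. lra.
    + assert (HS0 : forall N, Sp N t = 0).
      { induction N. reflexivity. unfold Sp in *. simpl. rewrite IHN.
        unfold a. replace (phi N t) with 0. ring. apply NNPP. intro Hne. apply Hnex. exists N. auto. }
      assert (L t = 0).
      { pose proof (HL1 t O). pose proof (HL2 t 0 (fun N => Req_le _ _ (HS0 N))). rewrite HS0 in H. lra. }
      simpl. rewrite H. apply Gz.
  - intro n. simpl. assert (0 < L (x n)); [|lra].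
    pose proof (HL1 (x n) (Datatypes.S n)). unfold Sp in H. simpl in H.
    pose proof (psum_mono (fun m => a m (x n)) O n (fun m => Ha0 m (x n)) ltac:(lia)). simpl in H0.
    unfold a in H, H0. rewrite Hp1 in H. destruct (Hm n) as [? _].
    pose proof (pow_lt (/2) (Datatypes.S (Datatypes.S n)) ltac:(lra)).
    assert (0 < mfix w n * (/ 2) ^ Datatypes.S (Datatypes.S n) * 1) by (rewrite Rmult_1_r; apply Rmult_lt_0_compat; lra).
    lra.
Qed.

Lemma notcc_notP0 {T : Type} (op : (T -> Prop) -> Prop) (Ht : is_topology op) :
  tychonoff op -> ~ countably_compact op -> ~ P0 op Ht.
Proof.
  intros Hty Hncc HP.
  destruct (notcc_seq op Ht (proj1 Hty) Hncc) as [x [Hinj Hdisc]].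
  destruct (HP _ (closure_A op Ht x Hty Hinj Hdisc)) as [B [HBA [HBc HBcl]]].
  apply (no_countable_B op Ht x Hinj Hdisc B); auto.
Qed.


Lemma Rabs_le_b x a : Rabs x <= a -> -a <= x <= a.
Proof. unfold Rabs. destruct (Rcase_abs x); intro; lra. Qed.

Definition Dset {T : Type} (op : (T -> Prop) -> Prop) (f g : CX op) : R -> Prop :=
  fun r => r = 0 \/ exists t, r = Rmin 1 (Rabs (proj1_sig f t - proj1_sig g t)).

Lemma Dset_bound {T : Type} (op : (T -> Prop) -> Prop) f g : bound (Dset op f g).
Proof. exists 1. intros r [->|[t ->]]. lra. apply Rmin_l. Qed.

Lemma Dset_ne {T : Type} (op : (T -> Prop) -> Prop) f g : exists r, Dset op f g r.
Proof. exists 0. left; auto. Qed.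

Definition gdist {T : Type} (op : (T -> Prop) -> Prop) (f g : CX op) : R :=
  proj1_sig (completeness _ (Dset_bound op f g) (Dset_ne op f g)).

Lemma dist_ub {T : Type} (op : (T -> Prop) -> Prop) f g t :
  Rmin 1 (Rabs (proj1_sig f t - proj1_sig g t)) <= gdist op f g.
Proof. apply (proj1 (proj2_sig (completeness _ (Dset_bound op f g) (Dset_ne op f g)))). right. exists t; auto. Qed.

Lemma dist_ge0 {T : Type} (op : (T -> Prop) -> Prop) f g : 0 <= gdist op f g.
Proof. apply (proj1 (proj2_sig (completeness _ (Dset_bound op f g) (Dset_ne op f g)))). left; auto. Qed.

Lemma dist_le {T : Type} (op : (T -> Prop) -> Prop) f g b :
  0 <= b -> (forall t, Rmin 1 (Rabs (proj1_sig f t - proj1_sig g t)) <= b) -> gdist op f g <= b.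
Proof.
  intros Hb H. apply (proj2 (proj2_sig (completeness _ (Dset_bound op f g) (Dset_ne op f g)))).
  intros r [->|[t ->]]; auto.
Qed.

Lemma dist_small {T : Type} (op : (T -> Prop) -> Prop) f g e t :
  e <= 1 -> gdist op f g < e -> Rabs (proj1_sig f t - proj1_sig g t) < e.
Proof.
  intros He Hd. pose proof (dist_ub op f g t). unfold Rmin in H.
  destruct (Rle_dec 1 (Rabs (proj1_sig f t - proj1_sig g t))); lra.
Qed.

Lemma dist_le_abs {T : Type} (op : (T -> Prop) -> Prop) f g b :
  0 <= b -> (forall t, Rabs (proj1_sig f t - proj1_sig g t) <= b) -> gdist op f g <= b.
Proof.
  intros Hb H. apply dist_le; auto. intro t. pose proof (Rmin_r 1 (Rabs (proj1_sig f t - proj1_sig g t))).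
  pose proof (H t). lra.
Qed.

Lemma dist_metric {T : Type} (op : (T -> Prop) -> Prop) : is_metric (gdist op).
Proof.
  split; [|split; [|split]].
  - apply dist_ge0.
  - intros f g. split.
    + intro H. apply CX_ext. intro t. pose proof (dist_ub op f g t). rewrite H in H0.
      unfold Rmin in H0. destruct (Rle_dec 1 (Rabs (proj1_sig f t - proj1_sig g t))). lra.
      pose proof (Rabs_pos (proj1_sig f t - proj1_sig g t)).
      assert (Rabs (proj1_sig f t - proj1_sig g t) = 0) by lra.
      destruct (Req_dec (proj1_sig f t - proj1_sig g t) 0) as [E|E]. lra. pose proof (Rabs_pos_lt _ E). lra.
    + intros ->. apply Rle_antisym. apply dist_le_abs. lra. intro t. rewrite Rminus_diag, Rabs_R0. lra.
      apply dist_ge0.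
  - intros f g. apply Rle_antisym; apply dist_le; try apply dist_ge0; intro t;
      rewrite Rabs_minus_sym; apply dist_ub.
  - intros f g h. apply dist_le. pose proof (dist_ge0 op f g). pose proof (dist_ge0 op g h). lra.
    intro t. pose proof (dist_ub op f g t). pose proof (dist_ub op g h t).
    set (a := proj1_sig f t) in *. set (b := proj1_sig g t) in *. set (c := proj1_sig h t) in *.
    pose proof (Rabs_triang (a - b) (b - c)). replace (a - b + (b - c)) with (a - c) in H1 by ring.
    pose proof (Rabs_pos (a - b)). pose proof (Rabs_pos (b - c)).
    unfold Rmin in *. destruct (Rle_dec 1 (Rabs (a - c))); destruct (Rle_dec 1 (Rabs (a - b)));
    destruct (Rle_dec 1 (Rabs (b - c))); lra.
Qed.

Lemma list_nat_max (l : list nat) : exists M, forall n, In n l -> (n <= M)%nat.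
Proof.
  induction l as [|a l [M HM]]. exists O. intros n [].
  exists (Nat.max a M). intros n [<-|H]. lia. pose proof (HM n H). lia.
Qed.

Lemma tube {T : Type} (op : (T -> Prop) -> Prop) (f : T -> R) G :
  is_topology op -> countably_compact op -> continuous op R_open f -> prod_open op G ->
  (forall t, G (t, f t)) -> exists eps, 0 < eps /\ forall t s, Rabs (s - f t) < eps -> G (t, s).
Proof.
  intros Ht Hcc Hf HG Hgr.
  set (Un := fun n t => exists V, (op V /\ forall y s, V y -> Rabs (s - f y) < / (INR n + 1) -> G (y, s)) /\ V t).
  destruct (Hcc Un) as [l Hl].
  - intro n. apply (proj2 (proj2 Ht)). intros V [HV _]. auto.
  - intro t. destruct (HG t (f t) (Hgr t)) as [V [eps [HV [Vt [He Hb]]]]].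
    pose proof (proj1 (cont_char op f Ht) Hf t (eps/2) ltac:(lra)) as [V' [HV' [V't HV'b]]].
    destruct (arch_inv (eps/2)) as [N HN]. lra.
    exists N. exists (fun y => V y /\ V' y). split; [|split; auto].
    split. apply op_inter; auto. intros y s [Vy V'y] Hs. apply Hb; auto.
    specialize (HV'b y V'y). pose proof (HN N (le_n N)).
    pose proof (Rabs_triang (s - f y) (f y - f t)). replace (s - f y + (f y - f t)) with (s - f t) in H0 by ring. lra.
  - destruct (list_nat_max l) as [M HM]. exists (/ (INR M + 1)). split.
    apply Rinv_0_lt_compat. pose proof (pos_INR M). lra.
    intros t s Hs. destruct (Hl t) as [n [Hn [V [[HV Hb] Vt]]]]. apply Hb; auto.
    pose proof (HM n Hn). apply le_INR in H. pose proof (pos_INR n).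
    assert (/ (INR M + 1) <= / (INR n + 1)). { apply Rinv_le_contravar; lra. }
    lra.
Qed.

Lemma cc_open_equiv {T : Type} (op : (T -> Prop) -> Prop) :
  is_topology op -> countably_compact op ->
  forall U, graph_open op U <-> metric_open (gdist op) U.
Proof.
  intros Ht Hcc U. split.
  - intros HU f Uf. destruct (HU f Uf) as [G [HG [Gf HGU]]].
    destruct (tube op (proj1_sig f) G Ht Hcc (proj2_sig f) HG Gf) as [eps [He Hb]].
    exists (Rmin eps 1). split. apply Rmin_case; lra. intros g Hg. apply HGU.
    intro t. apply Hb. rewrite Rabs_minus_sym.
    pose proof (dist_small op f g (Rmin eps 1) t (Rmin_r _ _) Hg). pose proof (Rmin_l eps 1). lra.
  - intros HU f Uf. destruct (HU f Uf) as [eps [He Hb]].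
    set (e := Rmin eps 1 / 2).
    assert (He' : 0 < e /\ e < eps) by (unfold e; pose proof (Rmin_l eps 1); pose proof (Rmin_r eps 1);
       split; [apply Rmin_case; lra| lra]). destruct He' as [He'a He'b].
    exists (fun p => Rabs (snd p - proj1_sig f (fst p)) < e). split; [|split].
    + intros x r Hr. simpl in Hr. set (del := e - Rabs (r - proj1_sig f x)).
      pose proof (proj1 (cont_char op _ Ht) (proj2_sig f) x (del/2) ltac:(unfold del; lra)) as [V [HV [Vx HVb]]].
      exists V, (del/2). split; auto. split; auto. split. unfold del; lra.
      intros y s Vy Hs. simpl. specialize (HVb y Vy).
      pose proof (Rabs_triang (s - r) (r - proj1_sig f x)).
      pose proof (Rabs_triang ((s - r) + (r - proj1_sig f x)) (proj1_sig f x - proj1_sig f y)).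
      replace (s - r + (r - proj1_sig f x) + (proj1_sig f x - proj1_sig f y)) with (s - proj1_sig f y) in H0 by ring.
      rewrite (Rabs_minus_sym (proj1_sig f x)) in H0. unfold del in *. lra.
    + intro t. simpl. rewrite Rminus_diag, Rabs_R0. lra.
    + intros g Hg. apply Hb. apply Rle_lt_trans with e; [|lra]. apply dist_le_abs. lra.
      intro t. specialize (Hg t). simpl in Hg. rewrite Rabs_minus_sym. lra.
Qed.

Lemma dist_complete {T : Type} (op : (T -> Prop) -> Prop) :
  is_topology op -> metric_complete (gdist op).
Proof.
  intros Ht s Hs.
  assert (Hcs : forall t, Cauchy_crit (fun n => proj1_sig (s n) t)).
  { intros t eps He. destruct (Hs (Rmin eps 1)) as [N HN]. apply Rmin_case; lra.
    exists N. intros n m Hn Hm. unfold R_dist.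
    pose proof (dist_small op (s n) (s m) (Rmin eps 1) t (Rmin_r _ _) (HN n m Hn Hm)).
    pose proof (Rmin_l eps 1). lra. }
  set (L := fun t => proj1_sig (R_complete _ (Hcs t))).
  assert (HL : forall t, Un_cv (fun n => proj1_sig (s n) t) (L t)) by (intro t; apply (proj2_sig (R_complete _ (Hcs t)))).
  assert (Hunif : forall eps, 0 < eps -> exists N, forall n, (N <= n)%nat -> forall t,
              Rabs (proj1_sig (s n) t - L t) <= eps).
  { intros eps He. set (e1 := Rmin eps 1 / 2).
    assert (He1 : 0 < e1 /\ e1 <= eps /\ e1 <= 1) by (unfold e1; pose proof (Rmin_l eps 1); pose proof (Rmin_r eps 1);
       split; [apply Rmin_case; lra| lra]). destruct He1 as [He1a [He1b He1c]].
    destruct (Hs e1) as [N HN]. lra. exists N. intros n Hn t.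
    apply Rnot_lt_le. intro Hc.
    destruct (HL t (Rabs (proj1_sig (s n) t - L t) - e1)) as [M HM]. lra.
    specialize (HM (Nat.max N M) ltac:(lia)). unfold R_dist in HM.
    pose proof (dist_small op (s n) (s (Nat.max N M)) e1 t ltac:(lra) (HN n (Nat.max N M) Hn ltac:(lia))).
    pose proof (Rabs_triang (proj1_sig (s n) t - proj1_sig (s (Nat.max N M)) t) (proj1_sig (s (Nat.max N M)) t - L t)) as Htri.
    replace (proj1_sig (s n) t - proj1_sig (s (Nat.max N M)) t + (proj1_sig (s (Nat.max N M)) t - L t))
      with (proj1_sig (s n) t - L t) in Htri by ring.
    lra. }
  assert (HLc : continuous op R_open L).
  { apply cont_char; auto. intros x eps He.
    destruct (Hunif (eps/4)) as [N HN]. lra.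
    pose proof (proj1 (cont_char op _ Ht) (proj2_sig (s N)) x (eps/4) ltac:(lra)) as [V [HV [Vx HVb]]].
    exists V. split; auto. split; auto. intros y Vy. specialize (HVb y Vy).
    pose proof (HN N (le_n N) x). pose proof (HN N (le_n N) y).
    apply Rabs_def2 in HVb. destruct HVb.
    apply Rabs_le_b in H. apply Rabs_le_b in H0. apply Rabs_def1; lra. }
  exists (exist _ L HLc). intros eps He. destruct (Hunif (eps/2)) as [N HN]. lra.
  exists N. intros n Hn. apply Rle_lt_trans with (eps/2); [|lra]. apply dist_le_abs. lra.
  intro t. simpl. apply HN; auto.
Qed.

Theorem proposition2p1 (T : Type) (op : (T -> Prop) -> Prop)
  (Htop : is_topology op) (Htych : tychonoff op) :
  (first_countable (graph_open op) <-> countably_compact op) /\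
  (metrizable (graph_open op) <-> countably_compact op) /\
  (completely_metrizable (graph_open op) <-> countably_compact op) /\
  (cech_complete (graph_open op) <-> countably_compact op) /\
  (frechet_urysohn (graph_open op) <-> countably_compact op) /\
  (countable_tightness (graph_open op) <-> countably_compact op).
Proof.
  assert (Hfwd : countably_compact op -> completely_metrizable (graph_open op)).
  { intro Hcc. exists (gdist op). split. apply dist_metric. split. apply dist_complete; auto.
    apply cc_open_equiv; auto. }
  assert (Hback : P0 op Htop -> countably_compact op).
  { intro HP. apply NNPP. intro Hn. apply (notcc_notP0 op Htop Htych Hn HP). }
  split; [|split; [|split; [|split; [|split]]]]; split; intro H.
  - apply Hback. apply fc_P0. auto.
  - apply metrizable_fc. apply cm_metrizable. auto.
  - apply Hback. apply fc_P0. apply metrizable_fc. auto.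
  - apply cm_metrizable. auto.
  - apply Hback. apply fc_P0. apply metrizable_fc. apply cm_metrizable. auto.
  - auto.
  - apply Hback. apply cech_P0. auto.
  - apply (cech_of_complete _ (gdist op)). apply dist_metric. apply dist_complete; auto.
    apply cc_open_equiv; auto.
  - apply Hback. apply tight_P0. apply frechet_tight. auto.
  - apply metrizable_frechet. apply cm_metrizable. auto.
  - apply Hback. apply tight_P0. auto.
  - apply frechet_tight. apply metrizable_frechet. apply cm_metrizable. auto.
Qed.
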